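(* In the setting below, if $\bar A$ is a global minimizer of $\min_{A\in\mathbb{R}^{n\times m}}\sum_{t=0}^{T-1}\|(\bar A-A)f(x_t)+\bar d_t\|_2$, then $$\Big\|\sum_{t\in\mathcal K} f(x_t)\hat d_t^\top\Big\|_F\le \sum_{t\in\mathcal K^c}\|f(x_t)\|_2 .$$ Moreover, when $m=1$, this condition is also sufficient for $\bar A$ to be a global minimizer.
   Context: $f:\mathbb{R}^n\to\mathbb{R}^m$ is given, $\bar A\in\mathbb{R}^{n\times m}$, $\bar d_0,\dots,\bar d_{T-1}\in\mathbb{R}^n$, and $x_0=0_n$, $x_{t+1}=\bar A f(x_t)+\bar d_t$ for $t=0,\dots,T-1$. $\mathcal K:=\{t\in\{0,\dots,T-1\}:\bar d_t\ne 0\}$, $\mathcal K^c:=\{0,\dots,T-1\}\setminus\mathcal K$, $\hat d_t:=\bar d_t/\|\bar d_t\|_2$ for $t\in\mathcal K$; $\|\cdot\|_F$ is the Frobenius norm. *)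

(* Defs.v *)
From mathcomp Require Import all_boot all_order all_algebra.
From mathcomp Require Import reals.
Set Implicit Arguments. Unset Strict Implicit. Unset Printing Implicit Defensive.
Import Order.TTheory GRing.Theory Num.Theory.
Local Open Scope ring_scope.

Definition norm2 {R : realType} {k : nat} (v : 'cV[R]_k) : R :=
  Num.sqrt (\sum_(i < k) v i 0 ^+ 2).

Definition frob {R : realType} {p q : nat} (M : 'M[R]_(p, q)) : R :=
  Num.sqrt (\sum_(i < p) \sum_(j < q) M i j ^+ 2).

Fixpoint traj {R : realType} {n m : nat} (f : 'cV[R]_n -> 'cV[R]_m)
  (Abar : 'M[R]_(n, m)) (d : nat -> 'cV[R]_n) (t : nat) : 'cV[R]_n :=
  match t with
  | O => 0
  | S s => Abar *m f (traj f Abar d s) + d s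
  end.

Definition objective {R : realType} {n m : nat} (T : nat)
  (f : 'cV[R]_n -> 'cV[R]_m) (Abar : 'M[R]_(n, m)) (d : nat -> 'cV[R]_n)
  (A : 'M[R]_(n, m)) : R :=
  \sum_(t < T) norm2 ((Abar - A) *m f (traj f Abar d t) + d t).

Definition is_global_minimizer {R : realType} {n m : nat} (T : nat)
  (f : 'cV[R]_n -> 'cV[R]_m) (Abar : 'M[R]_(n, m)) (d : nat -> 'cV[R]_n) : Prop :=
  forall A : 'M[R]_(n, m), objective T f Abar d Abar <= objective T f Abar d A.

Definition opt_condition {R : realType} {n m : nat} (T : nat)
  (f : 'cV[R]_n -> 'cV[R]_m) (Abar : 'M[R]_(n, m)) (d : nat -> 'cV[R]_n) : Prop :=
  frob (\sum_(t < T | d t != 0)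
          f (traj f Abar d t) *m ((norm2 (d t))^-1 *: d t)^T)
  <= \sum_(t < T | d t == 0) norm2 (f (traj f Abar d t)).

(* Main.v *)
Require Import Defs.
From mathcomp Require Import all_boot all_order all_algebra.
From mathcomp Require Import reals.
From mathcomp Require Import ring lra.
Import Order.TTheory GRing.Theory Num.Theory.
Local Open Scope ring_scope.

Section H.
Context {R : realType}.

Lemma cs_sq (I : finType) (P : pred I) (a b : I -> R) :
  (\sum_(i | P i) a i * b i) ^+ 2 <=
  (\sum_(i | P i) a i ^+ 2) * (\sum_(i | P i) b i ^+ 2).
Proof.
set A := \sum_(i | P i) a i ^+ 2; set B := \sum_(i | P i) b i ^+ 2.
set C := \sum_(i | P i) a i * b i.
have A0 : 0 <= A by apply: sumr_ge0 => i _; exact: sqr_ge0.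
have H : 0 <= \sum_(i | P i) (A * b i - C * a i) ^+ 2.
  by apply: sumr_ge0 => i _; exact: sqr_ge0.
have E : \sum_(i | P i) (A * b i - C * a i) ^+ 2 = A * (A * B - C ^+ 2).
  rewrite (eq_bigr (fun i => A ^+ 2 * b i ^+ 2 - (2 * A * C) * (a i * b i) + C ^+ 2 * a i ^+ 2)); last by move=> i _; ring.
  rewrite big_split /= sumrB -!mulr_sumr -/A -/B -/C; ring.
rewrite E in H.
have [Az|Ap] := eqVneq A 0.
  have az : forall i, P i -> a i = 0.
    move=> i Pi; apply/eqP; rewrite -sqrf_eq0; apply/eqP.
    by apply: (psumr_eq0P _ Az) => // j _; exact: sqr_ge0.
  rewrite /C big1 ?expr0n ?mul0r //=; first by rewrite Az mul0r.
  by move=> i Pi; rewrite az // mul0r.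
have Ap' : 0 < A by rewrite lt_def Ap A0.
rewrite pmulr_rge0 // in H; lra.
Qed.

Lemma cs_sq0 (I : finType) (a b : I -> R) :
  (\sum_i a i * b i) ^+ 2 <= (\sum_i a i ^+ 2) * (\sum_i b i ^+ 2).
Proof. by have := cs_sq _ xpredT a b. Qed.

Lemma cs (I : finType) (P : pred I) (a b : I -> R) :
  \sum_(i | P i) a i * b i <=
  Num.sqrt (\sum_(i | P i) a i ^+ 2) * Num.sqrt (\sum_(i | P i) b i ^+ 2).
Proof.
have A0 : 0 <= \sum_(i | P i) a i ^+ 2 by apply: sumr_ge0 => i _; exact: sqr_ge0.
rewrite -sqrtrM //; apply: le_trans (ler_norm _) _.
rewrite -sqrtr_sqr; apply: ler_wsqrtr; exact: cs_sq.
Qed.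


Lemma cs0 (I : finType) (a b : I -> R) :
  \sum_i a i * b i <= Num.sqrt (\sum_i a i ^+ 2) * Num.sqrt (\sum_i b i ^+ 2).
Proof. by have := cs _ xpredT a b. Qed.

Definition dot {k} (u v : 'cV[R]_k) := \sum_(i < k) u i 0 * v i 0.

Lemma sum_sq_ge0 (I : finType) (P : pred I) (a : I -> R) : 0 <= \sum_(i | P i) a i ^+ 2.
Proof. by apply: sumr_ge0 => i _; exact: sqr_ge0. Qed.

Lemma norm2_0 k : norm2 (0 : 'cV[R]_k) = 0.
Proof. by rewrite /norm2 big1 ?sqrtr0 // => i _; rewrite mxE expr0n. Qed.

Lemma norm2_ge0 k (v : 'cV[R]_k) : 0 <= norm2 v.
Proof. exact: sqrtr_ge0. Qed.

Lemma norm2_sq k (v : 'cV[R]_k) : norm2 v ^+ 2 = \sum_(i < k) v i 0 ^+ 2.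
Proof. by rewrite /norm2 sqr_sqrtr // sum_sq_ge0. Qed.

Lemma frob_sq p q (M : 'M[R]_(p, q)) : frob M ^+ 2 = \sum_(i < p) \sum_(j < q) M i j ^+ 2.
Proof. by rewrite /frob sqr_sqrtr //; apply: sumr_ge0 => i _; exact: sum_sq_ge0. Qed.

Lemma norm2_gt0 {k} (v : 'cV[R]_k) : v != 0 -> 0 < norm2 v.
Proof.
move=> v0; rewrite lt_def norm2_ge0 andbT; apply: contra v0 => /eqP H.
have : \sum_(i < k) v i 0 ^+ 2 = 0 by rewrite -norm2_sq H expr0n.
move=> S; apply/eqP/matrixP => i j; rewrite ord1 mxE.
apply/eqP; rewrite -sqrf_eq0; apply/eqP.
by apply: (psumr_eq0P _ S) => // l _; exact: sqr_ge0.
Qed.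

Lemma norm2_mul p q (M : 'M[R]_(p, q)) (v : 'cV[R]_q) :
  norm2 (M *m v) <= frob M * norm2 v.
Proof.
rewrite /norm2 /frob -sqrtrM; last by apply: sumr_ge0 => i _; exact: sum_sq_ge0.
apply: ler_wsqrtr; rewrite mulr_suml; apply: ler_sum => i _; rewrite mxE.
by have := cs_sq0 _ (fun j => M i j) (fun j => v j 0).
Qed.

Lemma norm2_scale k s (v : 'cV[R]_k) : 0 <= s -> norm2 (s *: v) = s * norm2 v.
Proof.
move=> s0; rewrite /norm2 -[X in X * _]ger0_norm // -sqrtr_sqr -sqrtrM ?sqr_ge0 //.
by rewrite mulr_sumr; congr Num.sqrt; apply: eq_bigr => i _; rewrite mxE exprMn.
Qed.

Definition dh {k} (d : 'cV[R]_k) := (norm2 d)^-1 *: d.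

Lemma dot_dh k (d w : 'cV[R]_k) : dot (dh d) w = (norm2 d)^-1 * dot d w.
Proof. by rewrite /dot mulr_sumr; apply: eq_bigr => i _; rewrite mxE mulrA. Qed.

Lemma norm2_lb k (d w : 'cV[R]_k) : d != 0 ->
  norm2 d + dot (dh d) w <= norm2 (w + d).
Proof.
move=> d0; have c0 := norm2_gt0 d d0; rewrite dot_dh.
have H : dot d (w + d) <= norm2 d * norm2 (w + d) by exact: cs.
have E : dot d (w + d) = dot d w + norm2 d ^+ 2.
  rewrite norm2_sq /dot -big_split /=; apply: eq_bigr => i _; rewrite mxE; ring.
rewrite E in H.
rewrite -(ler_pM2l c0) mulrDr mulrA mulfV ?gt_eqF // mul1r; lra.
Qed.

Lemma norm2_ub k (d w : 'cV[R]_k) s : d != 0 -> 0 <= s ->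
  norm2 (s *: w + d) <= norm2 d + s * dot (dh d) w
     + s ^+ 2 * (norm2 w ^+ 2 / (2 * norm2 d)).
Proof.
move=> d0 s0; have c0 := norm2_gt0 d d0; rewrite dot_dh.
set c := norm2 d; set X := dot d w; set W := norm2 w ^+ 2.
have XW : X ^+ 2 <= c ^+ 2 * W by rewrite /X /c /W !norm2_sq; exact: (cs_sq0 _).
have Q : \sum_(i < k) (s *: w + d) i 0 ^+ 2 = c ^+ 2 + 2 * s * X + s ^+ 2 * W.
  rewrite /c /W !norm2_sq /X /dot !mulr_sumr -!big_split /=.
  by apply: eq_bigr => i _; rewrite !mxE; ring.
set r := c + s * (c^-1 * X) + s ^+ 2 * (W / (2 * c)).
have cn : c != 0 by rewrite gt_eqF.
have r0 : 0 <= r.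
  have -> : r = ((c + s * (c^-1 * X)) ^+ 2 + c ^+ 2 + s ^+ 2 * (W - (c^-1 * X) ^+ 2)) / (2 * c).
    by rewrite /r; field; rewrite cn.
  apply: divr_ge0; last by rewrite mulr_ge0 // ltW.
  have : (c ^-1 * X) ^+ 2 <= W.
    rewrite exprMn -(ler_pM2l (exprn_gt0 2 c0)) mulrA -exprMn mulfV // expr1n mul1r //.
  move=> h; apply: addr_ge0; first by apply: addr_ge0; exact: sqr_ge0.
  by apply: mulr_ge0; [exact: sqr_ge0 | rewrite subr_ge0].
have -> : norm2 (s *: w + d) = Num.sqrt (\sum_(i < k) (s *: w + d) i 0 ^+ 2) by [].
rewrite Q -(ger0_norm r0) -sqrtr_sqr; apply: ler_wsqrtr.
have -> : r ^+ 2 = c ^+ 2 + 2 * s * X + s ^+ 2 * W + (s * (c^-1 * X) + s ^+ 2 * (W / (2 * c))) ^+ 2.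
  by rewrite /r; field; rewrite cn.
by rewrite lerDl sqr_ge0.
Qed.


Lemma split_sum n T (d : nat -> 'cV[R]_n) (h : 'I_T -> R) :
  \sum_(t < T) h t =
  \sum_(t < T | d t != 0) h t + \sum_(t < T | d t == 0) h t.
Proof.
rewrite (bigID (fun t : 'I_T => d t != 0)) /=; congr (_ + _).
by apply: eq_bigl => t; rewrite negbK.
Qed.

Lemma key_id n m T (d : nat -> 'cV[R]_n) (F : nat -> 'cV[R]_m) (D : 'M[R]_(n, m)) :
  \sum_(t < T | d t != 0) dot (dh (d t)) (D *m F t) =
  \sum_(i < n) \sum_(j < m) D i j *
     (\sum_(t < T | d t != 0) F t *m ((norm2 (d t))^-1 *: d t)^T) j i.
Proof.
have -> : \sum_(t < T | d t != 0) dot (dh (d t)) (D *m F t) =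
   \sum_(t < T | d t != 0) \sum_(i < n) \sum_(j < m)
       D i j * (F t j 0 * ((norm2 (d t))^-1 *: d t) i 0).
  apply: eq_bigr => t _; apply: eq_bigr => i _; rewrite !mxE mulr_sumr.
  by apply: eq_bigr => j _; ring.
rewrite exchange_big /=; apply: eq_bigr => i _.
rewrite exchange_big /=; apply: eq_bigr => j _.
rewrite summxE mulr_sumr; apply: eq_bigr => t _.
by rewrite !mxE big_ord1 !mxE.
Qed.

Lemma frobN p q (M : 'M[R]_(p, q)) : frob (- M) = frob M.
Proof.
by rewrite /frob; congr Num.sqrt; apply: eq_bigr => i _; apply: eq_bigr => j _; rewrite mxE sqrrN.
Qed.

Lemma frob_tr p q (M : 'M[R]_(p, q)) : frob (M^T) = frob M.
Proof.
rewrite /frob exchange_big /=; congr Num.sqrt.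
by apply: eq_bigr => i _; apply: eq_bigr => j _; rewrite mxE.
Qed.

Lemma cs_pair n m (D : 'M[R]_(n, m)) (G : 'M[R]_(m, n)) :
  \sum_(i < n) \sum_(j < m) D i j * G j i <= frob D * frob G.
Proof.
have pb : forall (X : 'I_n -> 'I_m -> R),
    \sum_(i < n) \sum_(j < m) X i j = \sum_(p : 'I_n * 'I_m) X p.1 p.2.
  by move=> X; exact: (pair_big xpredT xpredT X).
rewrite -(frob_tr _ _ G) /frob !pb.
rewrite (eq_bigr (fun p => D p.1 p.2 * G^T p.1 p.2)); last by move=> p _; rewrite mxE.
exact: (cs0 _ (fun p : 'I_n * 'I_m => D p.1 p.2) (fun p => G^T p.1 p.2)).
Qed.

Lemma norm2_mul1 n (D : 'M[R]_(n, 1)) (v : 'cV[R]_1) :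
  norm2 (D *m v) = frob D * norm2 v.
Proof.
rewrite /norm2 /frob -sqrtrM; last by apply: sumr_ge0 => i _; exact: sum_sq_ge0.
congr Num.sqrt; rewrite big_ord1 mulr_suml; apply: eq_bigr => i _.
by rewrite big_ord1 mxE big_ord1 exprMn.
Qed.

End H.

Theorem corollary2 (R : realType) (n m T : nat) (f : 'cV[R]_n -> 'cV[R]_m)
  (Abar : 'M[R]_(n, m)) (d : nat -> 'cV[R]_n) :
  (is_global_minimizer T f Abar d -> opt_condition T f Abar d) /\
  (m = 1%N -> opt_condition T f Abar d -> is_global_minimizer T f Abar d).
Proof.
have obj0 : objective T f Abar d Abar = \sum_(t < T | d t != 0) norm2 (d t).
  rewrite /objective subrr.
  under eq_bigr => t _ do rewrite mul0mx add0r.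
  rewrite (split_sum _ _ d) [X in _ + X]big1 ?addr0 // => t /eqP ->.
  exact: norm2_0.
split.
- move=> Hmin; rewrite /opt_condition.
  set G := (\sum_(t < T | d t != 0) _).
  set S := (\sum_(t < T | d t == 0) _).
  set D := - G^T.
  have S0 : 0 <= S by apply: sumr_ge0 => t _; exact: norm2_ge0.
  set C := \sum_(t < T | d t != 0)
      (norm2 (D *m f (traj f Abar d t)) ^+ 2 / (2 * norm2 (d t))).
  have C0 : 0 <= C.
    apply: sumr_ge0 => t _; apply: divr_ge0; first exact: sqr_ge0.
    by apply: mulr_ge0 => //; exact: norm2_ge0.
  have Hid : \sum_(t < T | d t != 0) dot (dh (d t)) (D *m f (traj f Abar d t))
        = - frob G ^+ 2.
    rewrite (key_id _ _ _ d (fun t => f (traj f Abar d t))) -/G frob_sq.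
    rewrite exchange_big /= -sumrN; apply: eq_bigr => j _.
    rewrite -sumrN; apply: eq_bigr => i _; rewrite !mxE; ring.
  have HfD : frob D = frob G by rewrite /D frobN frob_tr.
  have Hs : forall s, 0 < s -> frob G ^+ 2 - frob G * S <= s * C.
    move=> s s0; have := Hmin (Abar - s *: D).
    rewrite obj0 /objective (split_sum _ _ d).
    have -> : Abar - (Abar - s *: D) = s *: D by rewrite opprB addrC subrK.
    have H1 : \sum_(t < T | d t != 0) norm2 (s *: D *m f (traj f Abar d t) + d t)
        <= \sum_(t < T | d t != 0) norm2 (d t) + s * (- frob G ^+ 2) + s ^+ 2 * C.
      rewrite -Hid /C !mulr_sumr -!big_split /=; apply: ler_sum => t dt.
      rewrite -scalemxAl; exact: norm2_ub (ltW s0).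
    have H2 : \sum_(t < T | d t == 0) norm2 (s *: D *m f (traj f Abar d t) + d t)
        <= s * (frob G * S).
      rewrite /S !mulr_sumr; apply: ler_sum => t /eqP ->.
      rewrite addr0 -scalemxAl norm2_scale; last exact: ltW.
      apply: (ler_wpM2l (ltW s0)).
      rewrite -HfD; exact: norm2_mul.
    move=> H.
    have H3 : s * (frob G ^+ 2 - frob G * S) <= s * (s * C) by nra.
    by rewrite ler_pM2l in H3.
  rewrite leNgt; apply/negP => Hlt.
  have g0 : 0 < frob G by apply: le_lt_trans Hlt.
  set x := frob G ^+ 2 - frob G * S.
  have x0 : 0 < x.
    have -> : x = frob G * (frob G - S) by rewrite /x; ring.
    by apply: mulr_gt0 => //; rewrite subr_gt0.
  have C1 : 0 < C + 1 by lra.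
  have := Hs (x / (C + 1)) (divr_gt0 x0 C1).
  have -> : x / (C + 1) * C = x * (C / (C + 1)) by ring.
  have : C / (C + 1) < 1 by rewrite ltr_pdivrMr // mul1r; lra.
  rewrite -(ltr_pM2l x0) mulr1 => h1 h2.
  by have := lt_le_trans h1 h2; rewrite ltxx.
- move=> m1; subst m => Hopt A.
  move: Hopt; rewrite /opt_condition.
  set G := (\sum_(t < T | d t != 0) _).
  set S := (\sum_(t < T | d t == 0) _) => Hopt.
  rewrite obj0 /objective (split_sum _ _ d).
  set Dl := Abar - A.
  have H1 : \sum_(t < T | d t != 0) norm2 (d t)
       + \sum_(i < n) \sum_(j < 1) Dl i j * G j i
     <= \sum_(t < T | d t != 0) norm2 (Dl *m f (traj f Abar d t) + d t).
    rewrite -(key_id _ _ _ d (fun t => f (traj f Abar d t))) -big_split /=.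
    by apply: ler_sum => t dt; exact: norm2_lb.
  have H2 : \sum_(t < T | d t == 0) norm2 (Dl *m f (traj f Abar d t) + d t)
      = frob Dl * S.
    rewrite /S mulr_sumr; apply: eq_bigr => t /eqP ->.
    by rewrite addr0 norm2_mul1.
  have H3 : - (frob Dl * frob G) <= \sum_(i < n) \sum_(j < 1) Dl i j * G j i.
    have := cs_pair _ _ (- Dl) G; rewrite frobN.
    rewrite (eq_bigr (fun i => - \sum_(j < 1) Dl i j * G j i)); last first.
      by move=> i _; rewrite -sumrN; apply: eq_bigr => j _; rewrite mxE mulNr.
    rewrite sumrN; lra.
  have H4 : frob Dl * frob G <= frob Dl * S.
    exact: (ler_wpM2l (sqrtr_ge0 _)).
  rewrite H2; lra.
Qed.
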